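(* Let $G$ be a finite group acting transitively on a finite set $X$, and let $\mathscr{A}$ be the algebra of complex $X\times X$ matrices $M$ with $M_{g\cdot x,g\cdot y}=M_{x,y}$ for all $g\in G$, $x,y\in X$. Let $\mathcal{G}\in\mathscr{A}$ and let $\Phi=\{\phi_x\}_{x\in X}$ be a family of vectors (spanning a Hilbert space $\mathcal{H}$) whose Gram matrix $[\langle\phi_y,\phi_x\rangle]_{x,y}$ equals $\mathcal{G}$. Then $\Phi$ is a tight frame for $\mathcal{H}$ if and only if any (equivalently, every) projective reduction of $\Phi$ is a tight frame for $\mathcal{H}$.
   Context: For a family $\Phi=\{\phi_x\}_{x\in X}$, $x\sim y$ means $\phi_y=\alpha\phi_x$ for some unimodular $\alpha$; a projective reduction of $\Phi$ consists of one vector $\phi_x$ from each $\sim$-equivalence class. A family is a tight frame for $\mathcal{H}$ if $\sum_x|\langle\psi,\phi_x\rangle|^2=A\|\psi\|^2$ for all $\psi\in\mathcal{H}$ and some constant $A>0$. *)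

(* Defs.v *)
(* Complex scalars: an arbitrary numClosedFieldType C
   (e.g. algC), with conjugation z^*. *)
From HB Require Import structures.
From mathcomp Require Import all_boot all_order all_algebra all_fingroup.
Set Implicit Arguments. Unset Strict Implicit. Unset Printing Implicit Defensive.
Import Order.TTheory GRing.Theory Num.Theory.
Local Open Scope ring_scope.

Definition ip (C : numClosedFieldType) (n : nat) (u v : 'rV[C]_n) : C :=
  \sum_(i < n) u 0 i * (v 0 i)^*.

Definition gram (C : numClosedFieldType) (X : finType) (n : nat)
  (phi : X -> 'rV[C]_n) (x y : X) : C := ip (phi y) (phi x).

Definition invariant_mx (C : numClosedFieldType) (gT : finGroupType)
  (X : finType) (G : {set gT}) (to : {action gT &-> X}) (M : X -> X -> C) : Prop :=
  forall g x y, g \in G -> M (to x g) (to y g) = M x y.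

Definition in_span (C : numClosedFieldType) (X : finType) (n : nat)
  (phi : X -> 'rV[C]_n) (psi : 'rV[C]_n) : Prop :=
  exists c : X -> C, psi = \sum_(x : X) c x *: phi x.

Definition tight_frame_on (C : numClosedFieldType) (X : finType) (n : nat)
  (phi : X -> 'rV[C]_n) (S : {set X}) : Prop :=
  exists A : C, 0 < A /\
    forall psi, in_span phi psi ->
      \sum_(x in S) `|ip psi (phi x)| ^+ 2 = A * ip psi psi.

Definition proj_equiv (C : numClosedFieldType) (X : finType) (n : nat)
  (phi : X -> 'rV[C]_n) (x y : X) : Prop :=
  exists alpha : C, `|alpha| = 1 /\ phi y = alpha *: phi x.

Definition proj_reduction (C : numClosedFieldType) (X : finType) (n : nat)
  (phi : X -> 'rV[C]_n) (R : {set X}) : Prop :=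
  (forall x, exists2 y, y \in R & proj_equiv phi x y) /\
  (forall y z, y \in R -> z \in R -> proj_equiv phi y z -> y = z).

(* Main.v *)
Require Import Defs.
From HB Require Import structures.
From mathcomp Require Import all_boot all_order all_algebra all_fingroup.
From Stdlib Require Import ClassicalEpsilon.
Import Order.TTheory GRing.Theory Num.Theory.
Local Open Scope ring_scope.
Set Implicit Arguments. Unset Strict Implicit.

Section IP.
Variables (C : numClosedFieldType) (n : nat).
Implicit Types u v w : 'rV[C]_n.

Lemma ipDl u v w : ip (u + v) w = ip u w + ip v w.
Proof. by rewrite /ip -big_split; apply: eq_bigr => i _; rewrite mxE mulrDl. Qed.
Lemma ipZl a u w : ip (a *: u) w = a * ip u w.
Proof. by rewrite /ip mulr_sumr; apply: eq_bigr => i _; rewrite mxE mulrA. Qed.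
Lemma ipNl u w : ip (- u) w = - ip u w.
Proof. by rewrite /ip -sumrN; apply: eq_bigr => i _; rewrite mxE mulNr. Qed.
Lemma ipBl u v w : ip (u - v) w = ip u w - ip v w.
Proof. by rewrite ipDl ipNl. Qed.
Lemma ipDr u v w : ip u (v + w) = ip u v + ip u w.
Proof. by rewrite /ip -big_split; apply: eq_bigr => i _; rewrite mxE rmorphD mulrDr. Qed.
Lemma ipZr a u v : ip u (a *: v) = a^* * ip u v.
Proof. by rewrite /ip mulr_sumr; apply: eq_bigr => i _; rewrite mxE rmorphM mulrCA. Qed.
Lemma ipNr u v : ip u (- v) = - ip u v.
Proof. by rewrite /ip -sumrN; apply: eq_bigr => i _; rewrite mxE rmorphN mulrN. Qed.
Lemma ipBr u v w : ip u (v - w) = ip u v - ip u w.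
Proof. by rewrite ipDr ipNr. Qed.
Lemma ip0l w : ip 0 w = 0.
Proof. by rewrite /ip big1 // => i _; rewrite mxE mul0r. Qed.

Lemma ip_eq0 u : ip u u = 0 -> u = 0.
Proof.
move=> H.
have H2 : \sum_(i < n) `|u 0 i| ^+ 2 = 0.
  rewrite -[RHS]H /ip; apply: eq_bigr => i _; by rewrite normCK.
have := psumr_eq0P (fun i _ => exprn_ge0 2 (normr_ge0 (u 0 i))) H2.
move=> Hi; apply/rowP => i; rewrite mxE.
by have /eqP := Hi i isT; rewrite expf_eq0 normr_eq0 => /andP[_ /eqP].
Qed.
End IP.

Section Equiv.
Variables (C : numClosedFieldType) (n : nat) (X : finType) (phi : X -> 'rV[C]_n).

Definition peb x y : bool :=
  if excluded_middle_informative (proj_equiv phi x y) then true else false.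
Lemma pebP x y : reflect (proj_equiv phi x y) (peb x y).
Proof. by rewrite /peb; case: excluded_middle_informative => h; constructor. Qed.

Lemma pe_refl x : proj_equiv phi x x.
Proof. by exists 1; rewrite normr1 scale1r. Qed.
Lemma pe_sym x y : proj_equiv phi x y -> proj_equiv phi y x.
Proof.
case=> a [na e].
have a0 : a != 0 by rewrite -normr_eq0 na oner_eq0.
exists a^-1; split; first by rewrite normfV na invr1.
by rewrite e scalerA mulVf // scale1r.
Qed.
Lemma pe_trans x y z :
  proj_equiv phi x y -> proj_equiv phi y z -> proj_equiv phi x z.
Proof.
case=> a [na ea] [b [nb eb]]; exists (b * a); rewrite normrM na nb mulr1.
by split=> //; rewrite eb ea scalerA.
Qed.

Lemma pe_f psi x y : proj_equiv phi x y ->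
  `|ip psi (phi x)| ^+ 2 = `|ip psi (phi y)| ^+ 2.
Proof. by case=> a [na ->]; rewrite ipZr normrM norm_conjC na mul1r. Qed.

Definition cls x := [set y | peb x y].

Lemma red_exists : exists R, proj_reduction phi R.
Proof.
pose m x := [arg min_(y < x | peb x y) (enum_rank y : nat)].
have mP x : peb x (m x) /\ forall z, peb x z -> (enum_rank (m x) <= enum_rank z)%N.
  rewrite /m; case: arg_minnP; first exact/pebP/pe_refl.
  by move=> y py H; split.
exists [set m x | x : X]; split.
  move=> x; exists (m x); first exact: imset_f.
  by have [/pebP] := mP x.
move=> _ _ /imsetP[a _ ->] /imsetP[b _ ->] e.
have [/pebP pa ma] := mP a; have [/pebP pb mb] := mP b.
apply: enum_rank_inj; apply/val_inj/eqP; rewrite eqn_leq; apply/andP; split.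
  apply: ma; apply/pebP; exact: pe_trans pa e.
apply: mb; apply/pebP; exact: pe_trans pb (pe_sym e).
Qed.

Lemma sum_decomp (R : {set X}) (F : X -> C) (k : nat) :
  proj_reduction phi R ->
  (forall x y, proj_equiv phi x y -> F x = F y) ->
  (forall y, #|cls y| = k) ->
  \sum_(x in [set: X]) F x = (\sum_(y in R) F y) *+ k.
Proof.
move=> [HR1 HR2] Finv Hk.
have step x : F x = \sum_(y in R) (if peb y x then F x else 0).
  rewrite -big_mkcondr /=.
  case: (HR1 x) => y0 y0R pxy0.
  rewrite (big_pred1 y0) // => y /=.
  apply/idP/eqP => [/andP[yR /pebP pyx] | ->].
    exact: HR2 yR y0R (pe_trans pyx pxy0).
  by rewrite y0R; apply/pebP/pe_sym.
rewrite (eq_bigr _ (fun x _ => step x)) exchange_big /= -sumrMnl.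
apply: eq_bigr => y yR; rewrite -big_mkcondr /=.
rewrite (eq_bigr (fun _ => F y)); last first.
  by move=> x /andP[_ /pebP p]; apply: Finv; apply: pe_sym.
rewrite -(Hk y) -sumr_const; apply: eq_bigl => x; by rewrite !inE.
Qed.

Lemma tight_iff (R : {set X}) (k : nat) :
  (0 < k)%N -> proj_reduction phi R -> (forall y, #|cls y| = k) ->
  tight_frame_on phi [set: X] <-> tight_frame_on phi R.
Proof.
move=> k0 HR Hk.
have E psi := sum_decomp (F := fun x => `|ip psi (phi x)| ^+ 2) HR
    (fun x y h => pe_f psi h) Hk.
have kp : 0 < k%:R :> C by rewrite ltr0n.
split=> -[A [A0 HA]].
  exists (A / k%:R); split; first by rewrite divr_gt0.
  move=> psi Hs; have H := HA psi Hs; rewrite E -mulr_natr in H.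
  apply: (mulIf (lt0r_neq0 kp)); rewrite H [RHS]mulrAC mulfVK //.
  exact: lt0r_neq0.
exists (k%:R * A); split; first by rewrite mulr_gt0.
move=> psi Hs; by rewrite E HA // -mulrA mulr_natl.
Qed.

End Equiv.

Unset Implicit Arguments.

Theorem corollary3p19 (C : numClosedFieldType) (gT : finGroupType)
  (G : {group gT}) (X : finType) (to : {action gT &-> X}) (n : nat)
  (phi : X -> 'rV[C]_n)
  (Htrans : [transitive G, on [set: X] | to])
  (Hgram : invariant_mx G to (gram phi)) :
  (tight_frame_on phi [set: X] <->
     exists R, proj_reduction phi R /\ tight_frame_on phi R) /\
  (tight_frame_on phi [set: X] <->
     forall R, proj_reduction phi R -> tight_frame_on phi R).
Proof.
have pe_act g x y : g \in G -> proj_equiv phi x y ->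
    proj_equiv phi (to x g) (to y g).
  move=> Hg [a [na e]]; exists a; split=> //.
  apply/eqP; rewrite -subr_eq0; apply/eqP; apply: ip_eq0.
  have E u v : ip (phi (to u g)) (phi (to v g)) = ip (phi u) (phi v).
    by have := Hgram g v u Hg; rewrite /gram.
  have H0 : ip (phi y - a *: phi x) (phi y - a *: phi x) = 0.
    by rewrite -e subrr ip0l.
  by rewrite -H0 !(ipBl, ipBr, ipZl, ipZr) !E.
have card_le g x : g \in G -> (#|cls phi x| <= #|cls phi (to x g)|)%N.
  move=> Hg; rewrite -(card_imset _ (act_inj to g)); apply: subset_leq_card.
  apply/subsetP => z /imsetP[y]; rewrite inE => /pebP h ->; rewrite inE.
  by apply/pebP; apply: pe_act.
have card_eq x y : #|cls phi x| = #|cls phi y|.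
  have : y \in orbit to G x by rewrite (atransP Htrans) ?inE.
  case/orbitP => g Hg Ey; rewrite -Ey; apply/eqP; rewrite eqn_leq card_le //=.
  by have := card_le _ (to x g) (groupVr Hg); rewrite actK.
have [R0 HR0] := red_exists phi.
case: (set_0Vmem [set: X]) => [hX0 | [x0 _]].
  have hX (x : X) : false by have := in_setT x; rewrite hX0 inE.
  have triv S : tight_frame_on phi S.
    exists 1; split; first exact: ltr01.
    move=> psi [c ->].
    have -> : \sum_(x : X) c x *: phi x = 0.
      by rewrite big_pred0 // => x; have := hX x.
    by rewrite ip0l mulr0 big_pred0 // => x; have := hX x.
  split; split=> _; try exact: triv.
    by exists R0; split=> //; exact: triv.
  by move=> R _; exact: triv.
have k0 : (0 < #|cls phi x0|)%N.
  by apply/card_gt0P; exists x0; rewrite inE; apply/pebP/pe_refl.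
have TI R := @tight_iff C n X phi R _ k0 ^~ (fun y => card_eq y x0).
split; split.
- by move=> H; exists R0; split=> //; apply/(TI R0 HR0).
- by case=> R [HR H]; apply/(TI R HR).
- by move=> H R HR; apply/(TI R HR).
- by move=> H; apply/(TI R0 HR0)/H.
Qed.
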